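(* Let $P=\varprojlim\langle\{P_n\},\{p^n_k\}_{k<n}\rangle$ and $H=\varprojlim\langle\{H_n\},\{h^n_k\}_{k<n}\rangle$ be profinite posets and $f:P\to H$ a continuous quotient map. Then there exist a strictly increasing sequence $(i_n)_{n\in\mathbb{N}}$ of natural numbers and quotient maps $g_j:P_{i_j}\to H_j$ such that $f(x_1,x_2,\dots)=(g_1(x_{i_1}),g_2(x_{i_2}),\dots)$ for all $(x_n)\in P$, and $g_k\circ p^{i_n}_{i_k}=h^n_k\circ g_n$ for all $k<n$.
   Context: A quotient map between posets is a surjective order-preserving map $\phi:A\to B$ such that for all $p\le r$ in $B$ there are $x\le y$ in $A$ with $\phi(x)=p,\phi(y)=r$. A profinite poset is an inverse limit $\{(x_n)\in\prod_n P_n:p^{n+1}_n(x_{n+1})=x_n\ \forall n\}$ of nonempty finite posets $P_n$ with quotient maps $p^m_k:P_m\to P_k$ ($k<m$) satisfying $p^k_l\circ p^m_k=p^m_l$, ordered coordinatewise and topologized as a subspace of the product of discrete spaces. *)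

(* Defs.v *)
From mathcomp Require Import all_boot.
Set Implicit Arguments. Unset Strict Implicit. Unset Printing Implicit Defensive.

Definition is_poset (A : Type) (le : A -> A -> Prop) : Prop :=
  (forall x, le x x) /\
  (forall x y, le x y -> le y x -> x = y) /\
  (forall x y z, le x y -> le y z -> le x z).

Definition quotient_map (A B : Type) (leA : A -> A -> Prop) (leB : B -> B -> Prop)
  (phi : A -> B) : Prop :=
  (forall b, exists a, phi a = b) /\
  (forall x y, leA x y -> leB (phi x) (phi y)) /\
  (forall b1 b2, leB b1 b2 ->
     exists x y, leA x y /\ phi x = b1 /\ phi y = b2).

(* Inverse system of nonempty finite posets T n with bonding maps p m k : T m -> T k
   (only meaningful for k < m); indices start at 0. *)
Definition inverse_system (T : nat -> finType) (le : forall n, T n -> T n -> Prop)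
  (p : forall m k, T m -> T k) : Prop :=
  (forall n, is_poset (@le n)) /\
  (forall n, inhabited (T n)) /\
  (forall k m, k < m -> quotient_map (@le m) (@le k) (p m k)) /\
  (forall l k m, l < k -> k < m -> forall x, p k l (p m k x) = p m l x).

Definition invlim (T : nat -> finType) (p : forall m k, T m -> T k) : Type :=
  {x : forall n, T n | forall n, p n.+1 n (x n.+1) = x n}.

Definition invlim_le (T : nat -> finType) (le : forall n, T n -> T n -> Prop)
  (p : forall m k, T m -> T k) (x y : invlim p) : Prop :=
  forall n, le n (proj1_sig x n) (proj1_sig y n).

(* Continuity for the subspace topology of the product of discrete spaces:
   the basic open sets are cylinders fixing finitely many coordinates, and
   initial segments {0..M-1} of coordinates are cofinal among finite sets. *)
Definition invlim_continuous (T S : nat -> finType)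
  (p : forall m k, T m -> T k) (h : forall m k, S m -> S k)
  (f : invlim p -> invlim h) : Prop :=
  forall (x : invlim p) (N : nat), exists M : nat, forall y : invlim p,
    (forall i, i < M -> proj1_sig y i = proj1_sig x i) ->
    forall j, j < N -> proj1_sig (f y) j = proj1_sig (f x) j.

(* Main.v *)
Require Import Defs.
From mathcomp Require Import all_boot.
From Stdlib Require Import Classical ClassicalEpsilon.
Set Implicit Arguments. Unset Strict Implicit. Unset Printing Implicit Defensive.

Lemma thread_compat (T : nat -> finType) (le : forall n, T n -> T n -> Prop)
  (p : forall m k, T m -> T k) (H : inverse_system le p) (x : invlim p) k m :
  k < m -> p m k (proj1_sig x m) = proj1_sig x k.
Proof.
  case: H => _ [_ [_ Hc]].
  case: x => x Hx /=.
  elim: m => // m IH.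
  rewrite ltnS leq_eqVlt => /orP [/eqP -> | km]; first by apply Hx.
  rewrite -(Hc k m m.+1 km (ltnSn m)) Hx; exact: IH.
Qed.

Lemma thread_agree (T : nat -> finType) (le : forall n, T n -> T n -> Prop)
  (p : forall m k, T m -> T k) (H : inverse_system le p) (x y : invlim p) k m :
  k <= m -> proj1_sig x m = proj1_sig y m -> proj1_sig x k = proj1_sig y k.
Proof.
  rewrite leq_eqVlt => /orP [/eqP -> //| km] E.
  by rewrite -(thread_compat H x km) -(thread_compat H y km) E.
Qed.

Fixpoint build (A : nat -> Type) (a0 : A 0) (st : forall j, A j -> A j.+1) j : A j :=
  match j with 0 => a0 | j'.+1 => st j' (build a0 st j') end.

Lemma lift_pair_pos (T : nat -> finType) (le : forall n, T n -> T n -> Prop)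
  (p : forall m k, T m -> T k) (H : inverse_system le p) m (a b : T m.+1) :
  le _ a b -> exists x y : invlim p, invlim_le le x y /\ proj1_sig x m.+1 = a /\ proj1_sig y m.+1 = b.
Proof.
  move=> lab.
  have [Hpo [Hinh [Hq Hc]]] := H.
  have Hl : forall k (u v : T k), exists uv : T k.+1 * T k.+1,
      le _ u v -> (le _ uv.1 uv.2 /\ p k.+1 k uv.1 = u /\ p k.+1 k uv.2 = v).
    move=> k u v; case: (classic (le _ u v)) => huv.
      have [_ [_ Q]] := Hq k k.+1 (ltnSn k).
      have [x [y [xy [ex ey]]]] := Q u v huv.
      by exists (x, y).
    case: (Hinh k.+1) => t; by exists (t, t).
  pose L := fun k u v => proj1_sig (constructive_indefinite_description _ (Hl k u v)).
  have HL : forall k u v, le _ u v -> le _ (L k u v).1 (L k u v).2 /\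
       p k.+1 k (L k u v).1 = u /\ p k.+1 k (L k u v).2 = v.
    move=> k u v; exact: (proj2_sig (constructive_indefinite_description _ (Hl k u v))).
  pose AA := fun j => prod (T (j + m.+1)) (T (j + m.+1)).
  pose up := @build AA (a, b) (fun j (uv : AA j) => L (j + m.+1) uv.1 uv.2).
  have Hle : forall j, le _ (up j).1 (up j).2.
    elim=> [|j IH] //=; exact: (proj1 (HL _ _ _ IH)).
  have HP1 : forall j, p (j.+1 + m.+1) (j + m.+1) (up j.+1).1 = (up j).1.
    move=> j; exact: (proj1 (proj2 (HL _ _ _ (Hle j)))).
  have HP2 : forall j, p (j.+1 + m.+1) (j + m.+1) (up j.+1).2 = (up j).2.
    move=> j; exact: (proj2 (proj2 (HL _ _ _ (Hle j)))).
  have ltk : forall k, k < k + m.+1 by move=> k; rewrite addnS ltnS leq_addr.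
  pose x := fun k => p (k + m.+1) k (up k).1.
  pose y := fun k => p (k + m.+1) k (up k).2.
  have xt : forall k, p k.+1 k (x k.+1) = x k.
    move=> k; rewrite /x (Hc k k.+1 (k.+1 + m.+1) (ltnSn k) (ltk _)) -(HP1 k).
    by rewrite (Hc k (k + m.+1) (k.+1 + m.+1) (ltk _)) // addSn ltnSn.
  have yt : forall k, p k.+1 k (y k.+1) = y k.
    move=> k; rewrite /y (Hc k k.+1 (k.+1 + m.+1) (ltnSn k) (ltk _)) -(HP2 k).
    by rewrite (Hc k (k + m.+1) (k.+1 + m.+1) (ltk _)) // addSn ltnSn.
  have upa : forall j, p (j.+1 + m.+1) m.+1 (up j.+1).1 = a.
    elim=> [|j IH]; first exact: HP1 0.
    rewrite -(Hc m.+1 (j.+1 + m.+1) (j.+2 + m.+1)) ?HP1 //.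
      by rewrite addSn ltnS leq_addl.
  have upb : forall j, p (j.+1 + m.+1) m.+1 (up j.+1).2 = b.
    elim=> [|j IH]; first exact: HP2 0.
    rewrite -(Hc m.+1 (j.+1 + m.+1) (j.+2 + m.+1)) ?HP2 //.
      by rewrite addSn ltnS leq_addl.
  exists (exist _ x xt), (exist _ y yt); split; last by split; [exact: upa | exact: upb].
  move=> k /=; rewrite /x /y.
  have [_ [Qm _]] := Hq k (k + m.+1) (ltk k).
  exact: Qm.
Qed.

Lemma lift_pair (T : nat -> finType) (le : forall n, T n -> T n -> Prop)
  (p : forall m k, T m -> T k) (H : inverse_system le p) m (a b : T m) :
  le _ a b -> exists x y : invlim p, invlim_le le x y /\ proj1_sig x m = a /\ proj1_sig y m = b.
Proof.
  move=> lab; have [_ [_ [Hq _]]] := H.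
  have [_ [_ Q]] := Hq m m.+1 (ltnSn m).
  have [a' [b' [lab' [ea eb]]]] := Q a b lab.
  have [x [y [xy [ex ey]]]] := lift_pair_pos H lab'.
  exists x, y; split=> //.
  by rewrite -(thread_compat H x (ltnSn m)) ex ea -(thread_compat H y (ltnSn m)) ey eb.
Qed.

Lemma lift_one (T : nat -> finType) (le : forall n, T n -> T n -> Prop)
  (p : forall m k, T m -> T k) (H : inverse_system le p) m (a : T m) :
  exists x : invlim p, proj1_sig x m = a.
Proof.
  have [Hpo _] := H; have [refl _] := Hpo m.
  have [x [y [_ [e _]]]] := lift_pair H (refl a); by exists x.
Qed.

Lemma fin_bound (A : finType) (P : A -> nat -> Prop) :
  (forall c m m', m <= m' -> P c m -> P c m') -> (forall c, exists m, P c m) ->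
  exists M, forall c, P c M.
Proof.
  move=> mono ex.
  suff: forall s : seq A, exists M, forall c, c \in s -> P c M.
    case/(_ (enum A)) => M HM; exists M => c; apply: HM; by rewrite mem_enum.
  elim=> [|c s [M HM]]; first by exists 0.
  have [m Hm] := ex c.
  exists (maxn m M) => d; rewrite in_cons => /orP [/eqP -> | ds].
    by apply: (mono _ m) => //; rewrite leq_maxl.
  by apply: (mono _ M); [rewrite leq_maxr | apply: HM].
Qed.

Lemma unif (T : nat -> finType) (leT : forall n, T n -> T n -> Prop) (p : forall m k, T m -> T k)
  (S : nat -> finType) (h : forall m k, S m -> S k)
  (HT : inverse_system leT p) (f : invlim p -> invlim h)
  (fcont : invlim_continuous f) n :
  exists M, forall x y : invlim p, proj1_sig x M = proj1_sig y M ->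
     proj1_sig (f x) n = proj1_sig (f y) n.
Proof.
  apply: NNPP => Hno.
  have Hall : forall M, exists x y : invlim p, proj1_sig x M = proj1_sig y M /\
      proj1_sig (f x) n <> proj1_sig (f y) n.
    move=> M; apply: NNPP => HM; apply: Hno; exists M => x y e; apply: NNPP => ne.
    by apply: HM; exists x, y.
  pose E := fun k (a : T k) => forall M, exists x y : invlim p, proj1_sig x M = proj1_sig y M
     /\ proj1_sig x k = a /\ proj1_sig (f x) n <> proj1_sig (f y) n.
  have E0 : exists a, E 0 a.
    apply: NNPP => H0.
    have ex : forall a : T 0, exists M, forall x y : invlim p, proj1_sig x M = proj1_sig y M ->
        proj1_sig x 0 = a -> proj1_sig (f x) n = proj1_sig (f y) n.
      move=> a; apply: NNPP => Ha; apply: H0; exists a => M; apply: NNPP => HM.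
      apply: Ha; exists M => x y e ea; apply: NNPP => ne; apply: HM; by exists x, y.
    have [M HM] := fin_bound (fun c m m' lmm Pm x y e ea =>
                   Pm x y (thread_agree HT lmm e) ea) ex.
    have [x [y [e ne]]] := Hall M; by apply: ne; apply: (HM (proj1_sig x 0)).
  have Es : forall k a, E k a -> exists c : T k.+1, p k.+1 k c = a /\ E k.+1 c.
    move=> k a Ea; apply: NNPP => Hc.
    have ex : forall c : T k.+1, exists M, p k.+1 k c <> a \/
        forall x y : invlim p, proj1_sig x M = proj1_sig y M -> proj1_sig x k.+1 = c ->
        proj1_sig (f x) n = proj1_sig (f y) n.
      move=> c; case: (classic (p k.+1 k c = a)) => pc; last by exists 0; left.
      apply: NNPP => Hn; apply: Hc; exists c; split=> // M; apply: NNPP => HM.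
      apply: Hn; exists M; right => x y e ec; apply: NNPP => ne; apply: HM; by exists x, y.
    have mono : forall (c : T k.+1) m m', m <= m' ->
        (p k.+1 k c <> a \/ forall x y : invlim p, proj1_sig x m = proj1_sig y m ->
          proj1_sig x k.+1 = c -> proj1_sig (f x) n = proj1_sig (f y) n) ->
        (p k.+1 k c <> a \/ forall x y : invlim p, proj1_sig x m' = proj1_sig y m' ->
          proj1_sig x k.+1 = c -> proj1_sig (f x) n = proj1_sig (f y) n).
      move=> c m m' lmm [l|r]; [by left | right => x y e ec].
      exact: (r x y (thread_agree HT lmm e) ec).
    have [M HM] := fin_bound mono ex.
    have [x [y [e [ea ne]]]] := Ea M.
    case: (HM (proj1_sig x k.+1)) => [[] | HM'].
      by rewrite -ea; exact: (proj2_sig x k).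
    by apply: ne; apply: HM'.
  have [a0 Ea0] := constructive_indefinite_description _ E0.
  pose B := fun k => {a : T k | E k a}.
  pose st := fun k (b : B k) =>
    let c := constructive_indefinite_description _ (Es k _ (proj2_sig b)) in
    (exist (fun c => E k.+1 c) (proj1_sig c) (proj2 (proj2_sig c)) : B k.+1).
  pose br := @build B (exist _ a0 Ea0) st.
  have thr : forall k, p k.+1 k (proj1_sig (br k.+1)) = proj1_sig (br k).
    move=> k; exact: (proj1 (proj2_sig (constructive_indefinite_description _
        (Es k _ (proj2_sig (br k)))))).
  pose xb := exist _ (fun k => proj1_sig (br k)) thr : invlim p.
  have [M HM] := fcont xb n.+1.
  have [x [y [e [ea ne]]]] := proj2_sig (br M) M.
  apply: ne.
  have ex : proj1_sig x M = proj1_sig xb M by [].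
  have ey : proj1_sig y M = proj1_sig xb M by rewrite -e.
  rewrite (HM x _ n (ltnSn n)); last first.
    by move=> i iM; apply: (thread_agree HT (ltnW iM) ex).
  rewrite (HM y _ n (ltnSn n)) //.
  by move=> i iM; apply: (thread_agree HT (ltnW iM) ey).
Qed.

Theorem mainTheorem7
  (T : nat -> finType) (leT : forall n, T n -> T n -> Prop) (p : forall m k, T m -> T k)
  (S : nat -> finType) (leS : forall n, S n -> S n -> Prop) (h : forall m k, S m -> S k)
  (HT : inverse_system leT p) (HS : inverse_system leS h)
  (f : invlim p -> invlim h)
  (fcont : invlim_continuous f)
  (fquot : quotient_map (@invlim_le T leT p) (@invlim_le S leS h) f) :
  exists (i : nat -> nat) (g : forall j, T (i j) -> S j),
    (forall n, i n < i n.+1) /\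
    (forall j, quotient_map (@leT (i j)) (@leS j) (g j)) /\
    (forall (x : invlim p) (n : nat), proj1_sig (f x) n = g n (proj1_sig x (i n))) /\
    (forall k n, k < n -> forall z : T (i n), g k (p (i n) (i k) z) = h n k (g n z)).
Proof.
  pose Mf := fun n => proj1_sig (constructive_indefinite_description _ (unif HT fcont n)).
  have HMf : forall n (x y : invlim p), proj1_sig x (Mf n) = proj1_sig y (Mf n) ->
      proj1_sig (f x) n = proj1_sig (f y) n.
    move=> n; exact: (proj2_sig (constructive_indefinite_description _ (unif HT fcont n))).
  pose i := @build (fun _ => nat) (Mf 0) (fun n r => maxn (Mf n.+1) r.+1).
  have iS : forall n, i n < i n.+1 by move=> n; rewrite /= leq_maxr.
  have Mi : forall n, Mf n <= i n by case=> [|n] //=; rewrite leq_maxl.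
  have imono : forall k n, k < n -> i k < i n.
    move=> k; elim=> // n IH; rewrite ltnS leq_eqVlt => /orP [/eqP -> // | kn].
    exact: (ltn_trans (IH kn) (iS n)).
  pose thr := fun n (a : T n) => proj1_sig (constructive_indefinite_description _ (lift_one HT a)).
  have Hthr : forall n (a : T n), proj1_sig (thr n a) n = a.
    move=> n a; exact: (proj2_sig (constructive_indefinite_description _ (lift_one HT a))).
  pose g := fun j (a : T (i j)) => proj1_sig (f (thr (i j) a)) j.
  have gE : forall (x : invlim p) n, proj1_sig (f x) n = g n (proj1_sig x (i n)).
    move=> x n; rewrite /g; apply: HMf; apply: (thread_agree HT (Mi n)).
    by rewrite Hthr.
  have [fs [fm fl]] := fquot.
  exists i, g; split=> //; split; [|split=> //].
    move=> j; split; [|split].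
    - move=> b; have [y ey] := lift_one HS b; have [x fx] := fs y.
      by exists (proj1_sig x (i j)); rewrite -gE fx.
    - move=> a a' aa'; have [x [x' [xx' [ea ea']]]] := lift_pair HT aa'.
      rewrite -ea -ea' -!gE; exact: (fm x x' xx' j).
    - move=> b1 b2 bb; have [y1 [y2 [yy [e1 e2]]]] := lift_pair HS bb.
      have [x [x' [xx' [fx fx']]]] := fl y1 y2 yy.
      exists (proj1_sig x (i j)), (proj1_sig x' (i j)); split; first exact: xx'.
      by rewrite -!gE fx fx'.
  move=> k n kn z.
  have ex := Hthr (i n) z.
  have e1 : p (i n) (i k) z = proj1_sig (thr (i n) z) (i k).
    by rewrite -(thread_compat HT _ (imono _ _ kn)) ex.
  by rewrite e1 -gE -(thread_compat HS _ kn) gE ex.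
Qed.
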